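(* Let $G=(V,q)$ be a reversible connected graph. Then there exists a perfect coupling graph of $G$.
   Context: A graph $G=(V,q)$ consists of a countable set $V$ and a function $q:V\times V\to[0,\infty)$ such that $\#\{y:q(x,y)>0\}<\infty$ for every $x\in V$; its Laplacian is $\Delta f(x)=\sum_y q(x,y)(f(y)-f(x))$. $G$ is reversible if there is $m:V\to(0,\infty)$ with $q(x,y)m(x)=q(y,x)m(y)$. For reversible $G$, $x\sim y$ means $q(x,y)>0$ and $d$ is the combinatorial graph distance (finite since $G$ is connected). $q_{\min}:=\inf\{q(x,y):q(x,y)>0\}$. $(f\otimes g)(x,y)=f(x)g(y)$. A graph $\widetilde G=(V\times V,\widetilde q)$ with Laplacian $\widetilde\Delta$ is a coupling graph of $G$ if $\widetilde\Delta(f\otimes 1)=\Delta f\otimes 1$ and $\widetilde\Delta(1\otimes f)=1\otimes\Delta f$ for all $f:V\to\mathbb R$. A transport plan from $x_0$ to $y_0$ is $\rho:V\times V\to[0,\infty)$ with $\sum_{y}\rho(x,y)=q(x_0,x)$ for $x\neq x_0$ and $\sum_x\rho(x,y)=q(y_0,y)$ for $y\ne y_0$; $\mathrm{cost}(\rho)=\sum_{x,y}\rho(x,y)(d(x_0,y_0)-d(x,y))$; $\mu_\rho(k)=\sum_{d(x,y)-d(x_0,y_0)=k}\rho(x,y)$; $\rho$ is optimal if it maximizes cost among transport plans from $x_0$ to $y_0$. A coupling graph $\widetilde G$ is perfect if for all $x_0,y_0\in V$ the plan $\rho_{x_0y_0}:=\widetilde q((x_0,y_0),(\cdot,\cdot))$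 is an optimal transport plan from $x_0$ to $y_0$, satisfies $\mu_{\rho_{x_0y_0}}(k)=0$ whenever $|k|>1$, and satisfies $\mu_{\rho_{x_0y_0}}(-1)\ge 2q_{\min}$ whenever $x_0\ne y_0$. *)

(* Defs.v *)
From Stdlib Require Import Reals List Classical ClassicalEpsilon.
Import ListNotations.
Open Scope R_scope.

Definition has_fin_supp {T : Type} (F : T -> R) : Prop :=
  exists l : list T, forall t, F t <> 0 -> In t l.

Definition is_finsum {T : Type} (F : T -> R) (s : R) : Prop :=
  exists l : list T, NoDup l /\ (forall t, F t <> 0 -> In t l) /\
                     s = fold_right Rplus 0 (map F l).

(* [finsum F] = sum_t F t  (meaningful when F has finite support; this value
   does not depend on the chosen covering list). *)
Definition finsum {T : Type} (F : T -> R) : R :=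
  epsilon (inhabits 0) (is_finsum F).

Definition countable (V : Type) : Prop :=
  exists enc : V -> nat, forall x y, enc x = enc y -> x = y.

Definition is_graph {V : Type} (q : V -> V -> R) : Prop :=
  (forall x y, 0 <= q x y) /\ (forall x, has_fin_supp (q x)).

Definition laplacian {V : Type} (q : V -> V -> R) (f : V -> R) (x : V) : R :=
  finsum (fun y => q x y * (f y - f x)).

Definition reversible {V : Type} (q : V -> V -> R) : Prop :=
  exists m : V -> R, (forall x, 0 < m x) /\
    (forall x y, q x y * m x = q y x * m y).

Inductive walk {V : Type} (q : V -> V -> R) : V -> V -> nat -> Prop :=
| walk0 : forall x, walk q x x 0
| walkS : forall x y z n, 0 < q x y -> walk q y z n -> walk q x z (S n).

Definition connected {V : Type} (q : V -> V -> R) : Prop :=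
  forall x y, exists n, walk q x y n.

Definition dist {V : Type} (q : V -> V -> R) (x y : V) : nat :=
  epsilon (inhabits 0%nat)
    (fun n => walk q x y n /\ forall m, walk q x y m -> (n <= m)%nat).

Definition is_glb (S : R -> Prop) (m : R) : Prop :=
  (forall s, S s -> m <= s) /\ (forall b, (forall s, S s -> b <= s) -> b <= m).

Definition qmin {V : Type} (q : V -> V -> R) : R :=
  epsilon (inhabits 0) (is_glb (fun r => exists x y, 0 < q x y /\ r = q x y)).

Definition tensor {V : Type} (f g : V -> R) : V * V -> R :=
  fun p => f (fst p) * g (snd p).

Definition is_coupling_graph {V : Type} (q : V -> V -> R)
    (qt : V * V -> V * V -> R) : Prop :=
  is_graph qt /\
  (forall f : V -> R,
     laplacian qt (tensor f (fun _ => 1)) = tensor (laplacian q f) (fun _ => 1)) /\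
  (forall f : V -> R,
     laplacian qt (tensor (fun _ => 1) f) = tensor (fun _ => 1) (laplacian q f)).

(* rho : V x V -> [0,oo) (finitely supported, as the sums are finite sums) *)
Definition transport_plan {V : Type} (q : V -> V -> R) (x0 y0 : V)
    (rho : V -> V -> R) : Prop :=
  (forall x y, 0 <= rho x y) /\
  has_fin_supp (fun p : V * V => rho (fst p) (snd p)) /\
  (forall x, x <> x0 -> finsum (fun y => rho x y) = q x0 x) /\
  (forall y, y <> y0 -> finsum (fun x => rho x y) = q y0 y).

Definition cost {V : Type} (q : V -> V -> R) (x0 y0 : V)
    (rho : V -> V -> R) : R :=
  finsum (fun p : V * V =>
    rho (fst p) (snd p) * (INR (dist q x0 y0) - INR (dist q (fst p) (snd p)))).

Definition mu {V : Type} (q : V -> V -> R) (x0 y0 : V)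
    (rho : V -> V -> R) (k : Z) : R :=
  finsum (fun p : V * V =>
    if Z.eq_dec (Z.of_nat (dist q (fst p) (snd p)) - Z.of_nat (dist q x0 y0))%Z k
    then rho (fst p) (snd p) else 0).

Definition optimal_plan {V : Type} (q : V -> V -> R) (x0 y0 : V)
    (rho : V -> V -> R) : Prop :=
  transport_plan q x0 y0 rho /\
  forall rho', transport_plan q x0 y0 rho' -> cost q x0 y0 rho' <= cost q x0 y0 rho.

Definition perfect_coupling {V : Type} (q : V -> V -> R)
    (qt : V * V -> V * V -> R) : Prop :=
  is_coupling_graph q qt /\
  forall x0 y0 : V,
    let rho := fun x y => qt (x0, y0) (x, y) in
    optimal_plan q x0 y0 rho /\
    (forall k : Z, (Z.abs k > 1)%Z -> mu q x0 y0 rho k = 0) /\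
    (x0 <> y0 -> mu q x0 y0 rho (-1)%Z >= 2 * qmin q).

(* Main.v *)
Require Import Defs.
From Stdlib Require Import Reals List Lia Lra Classical ClassicalEpsilon FunctionalExtensionality Permutation ZArith.
Definition Ssum {T : Type} (l : list T) (f : T -> R) : R := fold_right Rplus 0%R (map f l).
Module LP.
From HB Require Import structures.
From mathcomp Require Import all_boot all_order all_algebra.
From mathcomp Require Import all_classical all_reals all_analysis.
From mathcomp Require Import Rstruct Rstruct_topology.
Import Order.TTheory GRing.Theory Num.Theory.
Import numFieldNormedType.Exports.
Local Open Scope classical_set_scope.
Local Open Scope ring_scope.
Lemma sum_cont (n : nat) (a : 'I_n -> R) (s : seq 'I_n) :
  continuous (fun v : 'rV[R]_n => \sum_(i <- s) a i * v ord0 i).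
Proof.
elim: s => [|i s IH].
  under eq_fun do rewrite big_nil. exact: cst_continuous.
under eq_fun do rewrite big_cons.
move=> x.
have h1 : {for x, continuous (fun v : 'rV[R]_n => a i * v ord0 i)}.
  apply: (continuousM (s:=fun=> a i) (t:=fun v : 'rV[R]_n => v ord0 i)); first exact: cst_continuous.
  exact: coord_continuous.
exact: (@continuousD R R^o _ _ _ x h1 (IH x)).
Qed.

Lemma lp_mc (n : nat) (J : Type) (A : J -> 'I_n -> R) (b : J -> R) (c : 'I_n -> R) (M : R) :
  let F := [set v : 'rV[R]_n | (forall i, 0 <= v ord0 i) /\ (forall j, \sum_i A j i * v ord0 i = b j)] in
  F !=set0 -> (forall v, F v -> forall i, v ord0 i <= M) ->
  exists2 v, F v & forall w, F w -> \sum_i c i * w ord0 i <= \sum_i c i * v ord0 i.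
Proof.
move=> F F0 FM.
have Fcl : closed F.
  have -> : F = (\bigcap_(i in setT) [set v : 'rV[R]_n | 0 <= v ord0 i]) `&`
                (\bigcap_(j in setT) ((fun v : 'rV[R]_n => \sum_i A j i * v ord0 i) @^-1` [set b j])).
    rewrite /F predeqE => v; split.
      by move=> [H1 H2]; split => [i _|j _]; [exact: H1|exact: H2].
    by move=> [H1 H2]; split => [i|j]; [exact: H1|exact: H2].
  apply: closedI; apply: closed_bigI => i _.
    have := @preimage_closed _ R (fun v : 'rV[R]_n => v ord0 i) [set x : R | 0 <= x].
    apply; last exact: closed_ge.
    by move=> x _; exact: coord_continuous.
  have := @preimage_closed _ R (fun v : 'rV[R]_n => \sum_k A i k * v ord0 k) [set b i].
  apply; last exact: closed_eq.
  by move=> x _; exact: (@sum_cont n (A i) (index_enum _)).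
have Kc : compact [set v : 'rV[R]_n | forall i, (fun=> `[0, M]%classic) i (v ord0 i)].
  exact: (@rV_compact R n (fun=> `[0, M]%classic) (fun=> @segment_compact R 0 M)).
have Fc : compact F.
  apply: (subclosed_compact Fcl Kc) => v Fv i /=.
  by rewrite in_itv /=; apply/andP; split; [case: Fv => + _; apply| exact: FM].
have [v vF vmax] := EVT_max_rV F0 Fc (continuous_subspaceT (@sum_cont n c (index_enum _))).
exists v; first exact: (set_mem vF).
by move=> w Fw; apply: vmax; exact: mem_set.
Qed.

Lemma Ssum_big {T : Type} (d : T) (l : list T) (f : T -> R) :
  Ssum l f = \sum_(i < size l) f (seq.nth d l i).
Proof.
rewrite /Ssum; elim: l => [|a l IH] /=; first by rewrite big_ord0.
by rewrite big_ord_recl /= IH.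
Qed.

Lemma nth_eq {T : Type} (d : T) (l : list T) i : seq.nth d l i = List.nth i l d.
Proof. by elim: l i => [|a l IH] [|i] //=. Qed.

Lemma lp_list {T J : Type} (d : T) (l : list T) (HN : NoDup l)
  (A : J -> T -> R) (b : J -> R) (c : T -> R) (M : R) :
  let Feas := fun rho : T -> R => (forall t, In t l -> Rle R0 (rho t)) /\
     (forall t, ~ In t l -> rho t = R0) /\
     (forall j, Ssum l (fun t => Rmult (A j t) (rho t)) = b j) in
  (exists rho, Feas rho) -> (forall rho, Feas rho -> forall t, In t l -> Rle (rho t) M) ->
  exists rho, Feas rho /\ forall rho', Feas rho' ->
     Rle (Ssum l (fun t => Rmult (c t) (rho' t))) (Ssum l (fun t => Rmult (c t) (rho t))).
Proof.
move=> Feas [r0 Fr0] HM.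
set n := size l.
pose vec (rho : T -> R) : 'rV[R]_n := \row_(i < n) rho (seq.nth d l i).
pose fn (v : 'rV[R]_n) (t : T) : R := \sum_(i < n) (if `[< seq.nth d l i = t >] then v ord0 i else 0).
have inl : forall i : 'I_n, In (seq.nth d l i) l.
  move=> i; rewrite nth_eq; apply: nth_In; apply/ssrnat.ltP; exact: ltn_ord.
have fn_nth : forall v (j : 'I_n), fn v (seq.nth d l j) = v ord0 j.
  move=> v j; rewrite /fn (bigD1 j) //=.
  rewrite asboolT // big1 ?addr0 // => i ij.
  case: asboolP => // e; exfalso; move: ij => /eqP; apply; apply: val_inj => /=.
  move: e; rewrite !nth_eq => e.
  apply: (proj1 (NoDup_nth l d) HN); [apply/ssrnat.ltP; exact: ltn_ord|apply/ssrnat.ltP; exact: ltn_ord|exact: e].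
have fn_out : forall v t, ~ In t l -> fn v t = 0.
  move=> v t Ht; rewrite /fn big1 // => i _; case: asboolP => // e; exfalso; apply: Ht; rewrite -e; exact: inl.
have fn_in : forall t, In t l -> exists j : 'I_n, t = seq.nth d l j.
  move=> t Ht; have [k [Hk Hkt]] := (In_nth l t d Ht).
  have Hk' : (k < n)%N by apply/ssrnat.ltP.
  by exists (Ordinal Hk'); rewrite nth_eq.
have sumfn : forall (g : T -> R) v, Ssum l (fun t => g t * fn v t)%R = \sum_(i < n) g (seq.nth d l i) * v ord0 i.
  move=> g v; rewrite (Ssum_big d); apply: eq_bigr => i _; by rewrite fn_nth.
have sumvec : forall (g : T -> R) rho, Ssum l (fun t => g t * rho t)%R = \sum_(i < n) g (seq.nth d l i) * vec rho ord0 i.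
  move=> g rho; rewrite (Ssum_big d); apply: eq_bigr => i _; by rewrite mxE.
pose F := [set v : 'rV[R]_n | (forall i, 0 <= v ord0 i) /\ (forall j, \sum_(i < n) A j (seq.nth d l i) * v ord0 i = b j)].
have FvecF : forall rho, Feas rho -> F (vec rho).
  move=> rho [H1 [H2 H3]]; split => [i|j]; first by rewrite mxE; apply/RleP; exact: (H1 _ (inl i)).
  by rewrite -H3 sumvec.
have FFeas : forall w, F w -> Feas (fn w).
  move=> w [w0 wb]; split; [|split].
  - move=> t /fn_in [j ->]; rewrite fn_nth; apply/RleP; exact: w0.
  - exact: fn_out.
  - by move=> j; rewrite sumfn; exact: wb.
have Hb : forall w, F w -> forall i, w ord0 i <= M.
  move=> w Fw i.
  by have := HM _ (FFeas w Fw) (seq.nth d l i) (inl i); rewrite fn_nth => /RleP.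
have [v vF vmax] := @lp_mc n J (fun j i => A j (seq.nth d l i)) b (fun i => c (seq.nth d l i)) M
   (ex_intro _ (vec r0) (FvecF r0 Fr0)) Hb.
exists (fn v); split; first exact: FFeas.
move=> rho' Fr'; apply/RleP; rewrite sumfn sumvec; exact: vmax (FvecF _ Fr').
Qed.
End LP.

Require Import Defs.
Import ListNotations.
Open Scope R_scope.
Import ListNotations.
Open Scope R_scope.

Notation Ss := Ssum.

Definition eqd {A : Type} (x y : A) : {x = y} + {x <> y} := excluded_middle_informative (x = y).
Definition dl {A : Type} (x y : A) : R := if eqd x y then 1 else 0.

Lemma Ss_nil {T} (f : T -> R) : Ss [] f = 0. Proof. reflexivity. Qed.
Lemma Ss_cons {T} a l (f : T -> R) : Ss (a :: l) f = f a + Ss l f. Proof. reflexivity. Qed.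
Lemma Ss_app {T} l1 l2 (f : T -> R) : Ss (l1 ++ l2) f = Ss l1 f + Ss l2 f.
Proof. induction l1; simpl app; [rewrite Ss_nil; ring| rewrite !Ss_cons, IHl1; ring]. Qed.
Lemma Ss_ext {T} l (f g : T -> R) : (forall t, In t l -> f t = g t) -> Ss l f = Ss l g.
Proof. induction l; intros H; [reflexivity|]. rewrite !Ss_cons. f_equal. apply H; simpl; auto. apply IHl; intros; apply H; simpl; auto. Qed.
Lemma Ss_plus {T} l (f g : T -> R) : Ss l (fun t => f t + g t) = Ss l f + Ss l g.
Proof. induction l; [rewrite !Ss_nil; ring|rewrite !Ss_cons, IHl; ring]. Qed.
Lemma Ss_scal {T} l c (f : T -> R) : Ss l (fun t => c * f t) = c * Ss l f.
Proof. induction l; [rewrite !Ss_nil; ring|rewrite !Ss_cons, IHl; ring]. Qed.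
Lemma Ss_scalr {T} l c (f : T -> R) : Ss l (fun t => f t * c) = Ss l f * c.
Proof. induction l; [rewrite !Ss_nil; ring|rewrite !Ss_cons, IHl; ring]. Qed.
Lemma Ss_zero {T} l (f : T -> R) : (forall t, In t l -> f t = 0) -> Ss l f = 0.
Proof. intros H. rewrite (Ss_ext l f (fun _ => 0)) by auto. induction l; [reflexivity| rewrite Ss_cons, IHl; [ring| intros; apply H; simpl; auto]]. Qed.
Lemma Ss_le {T} l (f g : T -> R) : (forall t, In t l -> f t <= g t) -> Ss l f <= Ss l g.
Proof. induction l; intros H; [rewrite !Ss_nil; lra|]. rewrite !Ss_cons.
  assert (f a <= g a) by (apply H; simpl; auto). assert (Ss l f <= Ss l g) by (apply IHl; intros; apply H; simpl; auto). lra. Qed.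
Lemma Ss_nonneg {T} l (f : T -> R) : (forall t, In t l -> 0 <= f t) -> 0 <= Ss l f.
Proof. intros H. rewrite <- (Ss_zero l (fun _ => 0)) by auto. apply Ss_le; auto. Qed.
Lemma Ss_perm {T} l1 l2 (f : T -> R) : Permutation l1 l2 -> Ss l1 f = Ss l2 f.
Proof. induction 1; try reflexivity. rewrite !Ss_cons, IHPermutation; reflexivity. rewrite !Ss_cons; ring. congruence. Qed.
Lemma Ss_swap {A B} (l1 : list A) (l2 : list B) (f : A -> B -> R) :
  Ss l1 (fun x => Ss l2 (fun y => f x y)) = Ss l2 (fun y => Ss l1 (fun x => f x y)).
Proof. induction l1.
  - rewrite Ss_nil, Ss_zero; auto.
  - rewrite Ss_cons, IHl1. rewrite <- Ss_plus. apply Ss_ext. intros; rewrite Ss_cons; reflexivity. Qed.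
Lemma Ss_prod {A B} (l1 : list A) (l2 : list B) (f : A * B -> R) :
  Ss (list_prod l1 l2) f = Ss l1 (fun x => Ss l2 (fun y => f (x, y))).
Proof. induction l1; [reflexivity|]. simpl list_prod. rewrite Ss_app, IHl1, Ss_cons. f_equal.
  clear. induction l2; [reflexivity|]. simpl map. rewrite !Ss_cons, IHl2. reflexivity. Qed.
Lemma Ss_delta {T} l (a : T) (f : T -> R) : NoDup l -> In a l -> Ss l (fun t => dl t a * f t) = f a.
Proof. induction 1; intros Hin; [destruct Hin|]. rewrite Ss_cons. destruct Hin as [<-|Hin].
  - rewrite Ss_zero. unfold dl; destruct (eqd x x); [ring|congruence].
    intros t Ht; unfold dl; destruct (eqd t x); [subst; contradiction| ring].
  - rewrite IHNoDup by auto. unfold dl; destruct (eqd x a); [subst; contradiction|ring]. Qed.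
Lemma Ss_delta' {T} l (a : T) (f : T -> R) : NoDup l -> In a l -> Ss l (fun t => dl a t * f t) = f a.
Proof. intros. rewrite <- (Ss_delta l a f) by auto. apply Ss_ext; intros; unfold dl.
  destruct (eqd a t), (eqd t a); subst; try congruence; ring. Qed.
Lemma Ss_delta_out {T} l (a : T) (f : T -> R) : ~ In a l -> Ss l (fun t => dl t a * f t) = 0.
Proof. intros H. apply Ss_zero. intros t Ht; unfold dl; destruct (eqd t a); [subst; contradiction|ring]. Qed.
Lemma Ss_nonneg_zero {T} l (f : T -> R) : (forall t, In t l -> 0 <= f t) -> Ss l f = 0 -> forall t, In t l -> f t = 0.
Proof. induction l; intros H0 H t Ht; [destruct Ht|]. rewrite Ss_cons in H.
  assert (0 <= f a) by (apply H0; simpl; auto).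
  assert (0 <= Ss l f) by (apply Ss_nonneg; intros; apply H0; simpl; auto).
  destruct Ht as [<-|Ht]; [lra|]. apply IHl; auto; [intros; apply H0; simpl; auto| lra]. Qed.

Lemma NoDup_prod {A B} (l1 : list A) (l2 : list B) : NoDup l1 -> NoDup l2 -> NoDup (list_prod l1 l2).
Proof. induction 1; intros H2; [constructor|]. simpl. apply NoDup_app; auto.
  - clear IHNoDup H0. induction H2; simpl; constructor; auto. intros Hin. apply in_map_iff in Hin. destruct Hin as [y [Hy Hy']]. inversion Hy; subst; contradiction.
  - intros [a b] Ha Hb. apply in_map_iff in Ha. destruct Ha as [y [Hy _]]. inversion Hy; subst. apply in_prod_iff in Hb. tauto. Qed.

Lemma Ss_sub {T} (l1 l2 : list T) (F : T -> R) : NoDup l1 -> NoDup l2 -> incl l1 l2 ->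
  (forall t, In t l2 -> ~ In t l1 -> F t = 0) -> Ss l2 F = Ss l1 F.
Proof. revert l1. induction l2 as [|a r IH]; intros l1 N1 N2 Hi HF.
  - destruct l1; [reflexivity| exfalso; apply (Hi t); simpl; auto].
  - inversion N2; subst. rewrite Ss_cons. destruct (classic (In a l1)) as [Ha|Ha].
    + destruct (in_split a l1 Ha) as [u [w ->]].
      rewrite (Ss_perm (u ++ a :: w) (a :: u ++ w)) by (symmetry; apply Permutation_middle). rewrite Ss_cons.
      assert (Nuw : NoDup (a :: u ++ w)) by (eapply Permutation_NoDup; [symmetry; apply Permutation_middle| exact N1]).
      inversion Nuw; subst.
      rewrite (IH (u ++ w)); auto.
      * intros t Ht. assert (In t (u ++ a :: w)) by (apply in_app_iff in Ht; apply in_app_iff; simpl; tauto).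
        destruct (Hi t H); [subst; contradiction| auto].
      * intros t Ht Hn. apply HF; [simpl; auto|]. intros Hin. apply in_app_iff in Hin; simpl in Hin.
        destruct Hin as [?|[<-|?]]; [apply Hn; apply in_app_iff; auto|contradiction|apply Hn; apply in_app_iff; auto].
    + rewrite HF by (simpl; auto). rewrite (IH l1); auto; [ring| |].
      * intros t Ht. destruct (Hi t Ht); [subst; contradiction|auto].
      * intros t Ht Hn; apply HF; simpl; auto. Qed.

Lemma Ss_cover {T} (l1 l2 : list T) (F : T -> R) : NoDup l1 -> NoDup l2 ->
  (forall t, F t <> 0 -> In t l1) -> (forall t, F t <> 0 -> In t l2) -> Ss l1 F = Ss l2 F.
Proof. intros N1 N2 H1 H2.
  set (l0 := filter (fun t => if Req_EM_T (F t) 0 then false else true) l1).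
  assert (N0 : NoDup l0) by (apply NoDup_filter; auto).
  assert (Hin : forall t, In t l0 <-> F t <> 0 /\ In t l1).
  { intros t; unfold l0; rewrite filter_In. destruct (Req_EM_T (F t) 0); split; intros; intuition congruence. }
  rewrite (Ss_sub l0 l1), (Ss_sub l0 l2); auto.
  - intros t Ht; apply Hin in Ht; apply H2; tauto.
  - intros t Ht Hn. destruct (Req_EM_T (F t) 0); auto. exfalso; apply Hn, Hin; auto.
  - intros t Ht; apply Hin in Ht; tauto.
  - intros t Ht Hn. destruct (Req_EM_T (F t) 0); auto. exfalso; apply Hn, Hin; auto. Qed.

Lemma finsum_S {T} (l : list T) (F : T -> R) : NoDup l -> (forall t, F t <> 0 -> In t l) -> finsum F = Ss l F.
Proof. intros N H. unfold finsum.
  assert (Hex : exists s, is_finsum F s) by (exists (Ss l F); exists l; auto).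
  destruct (epsilon_spec (inhabits 0) (is_finsum F) Hex) as [l' [N' [H' E]]].
  rewrite E. apply Ss_cover; auto. Qed.

Import ListNotations.
Open Scope R_scope.

Section Graph.
Variable V : Type.
Variable q : V -> V -> R.
Hypothesis Hg : is_graph q.
Hypothesis Hrev : reversible q.
Hypothesis Hconn : connected q.

Lemma qnn x y : 0 <= q x y. Proof. apply Hg. Qed.
Lemma adj_sym x y : 0 < q x y -> 0 < q y x.
Proof. intros H. destruct Hrev as [m [Hm Hq]]. specialize (Hq x y). specialize (Hm x) as Hx. specialize (Hm y) as Hy.
  destruct (Rle_lt_or_eq_dec 0 (q y x) (qnn y x)) as [?|E]; auto. rewrite <- E in Hq.
  assert (q x y * m x > 0) by (apply Rmult_lt_0_compat; auto). lra. Qed.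

Lemma walk_snoc x y z n : walk q x y n -> 0 < q y z -> walk q x z (S n).
Proof. induction 1; intros. econstructor; eauto; constructor. econstructor; eauto. Qed.
Lemma walk_rev x y n : walk q x y n -> walk q y x n.
Proof. induction 1. constructor. eapply walk_snoc; eauto. apply adj_sym; auto. Qed.
Lemma walk_app x y z n m : walk q x y n -> walk q y z m -> walk q x z (n + m).
Proof. induction 1; intros; simpl; auto. econstructor; eauto. Qed.

Lemma min_walk x y : exists k, walk q x y k /\ forall m, walk q x y m -> (k <= m)%nat.
Proof. destruct (Hconn x y) as [n Hn]. revert Hn. induction n as [n IH] using lt_wf_ind. intros Hn.
  destruct (classic (exists m, (m < n)%nat /\ walk q x y m)) as [[m [Hm Hw]]|Hno].
  - apply (IH m Hm Hw).
  - exists n; split; auto. intros m Hm. destruct (Nat.lt_ge_cases m n); auto. exfalso; apply Hno; eauto. Qed.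

Lemma dist_spec x y : walk q x y (dist q x y) /\ forall m, walk q x y m -> (dist q x y <= m)%nat.
Proof. unfold dist. apply (epsilon_spec (inhabits 0%nat) (fun n => walk q x y n /\ forall m, walk q x y m -> (n <= m)%nat)).
  apply min_walk. Qed.
Lemma dist_le x y m : walk q x y m -> (dist q x y <= m)%nat. Proof. apply dist_spec. Qed.
Lemma dist_tri x y z : (dist q x z <= dist q x y + dist q y z)%nat.
Proof. apply dist_le. apply walk_app with y; apply dist_spec. Qed.
Lemma dist_sym x y : dist q x y = dist q y x.
Proof. apply Nat.le_antisymm; apply dist_le; apply walk_rev; apply dist_spec. Qed.
Lemma dist_adj x y : 0 < q x y -> (dist q x y <= 1)%nat.
Proof. intros; apply dist_le. econstructor; eauto; constructor. Qed.
Lemma dist_refl x : dist q x x = 0%nat.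
Proof. apply Nat.le_0_r. apply dist_le. constructor. Qed.
Lemma dist_zero x y : dist q x y = 0%nat -> x = y.
Proof. intros H. destruct (dist_spec x y) as [W _]. rewrite H in W. inversion W; auto. Qed.

Lemma first_step x y : x <> y -> exists z, 0 < q x z /\ S (dist q z y) = dist q x y.
Proof. intros Hxy. destruct (dist_spec x y) as [W _].
  inversion W as [x' Hx Hn | x' w z n Hq W' Hx Hz Hn].
  - congruence.
  - subst. exists w. split; auto. assert (dist q w y <= n)%nat by (apply dist_le; auto).
    assert (dist q x y <= dist q x w + dist q w y)%nat by apply dist_tri.
    assert (dist q x w <= 1)%nat by (apply dist_adj; auto). lia. Qed.
Lemma qmin_le x y : 0 < q x y -> qmin q <= q x y.
Proof. intros Hxy. unfold qmin.
  set (E := fun r => exists x y, 0 < q x y /\ r = q x y).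
  assert (Hex : exists m, Defs.is_glb E m).
  { destruct (completeness (fun r => E (- r))) as [m [Hub Hlub]].
    - exists 0. intros r [a [b [Hab Hr]]]. lra.
    - exists (- q x y). exists x, y. split; auto; ring.
    - exists (- m). split.
      + intros s Hs. assert (- s <= m). { apply Hub. replace (- - s) with s by ring. auto. } lra.
      + intros b Hb. assert (m <= - b). { apply Hlub. intros r Hr. specialize (Hb _ Hr). lra. } lra. }
  destruct (epsilon_spec (inhabits 0) (Defs.is_glb E) Hex) as [H1 _]. apply H1. exists x, y; auto. Qed.
End Graph.

Import ListNotations.
Open Scope R_scope.

Lemma Ss_point {T} (l : list T) (f : T -> R) a : NoDup l -> (forall t, In t l -> 0 <= f t) -> In a l -> f a <= Ss l f.
Proof. intros N H Ha. rewrite <- (Ss_delta l a f N Ha). apply Ss_le. intros t Ht. specialize (H t Ht).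
  unfold dl; destruct (eqd t a); lra. Qed.

Lemma finsum_zero_entries {T} (g : T -> R) : (forall t, 0 <= g t) -> has_fin_supp g -> finsum g = 0 -> forall t, g t = 0.
Proof. intros Hn [l Hl] Hs t. set (l' := nodup eqd l).
  assert (Hl' : forall t, g t <> 0 -> In t l') by (intros; apply nodup_In; auto).
  rewrite (finsum_S l') in Hs by (auto; apply NoDup_nodup).
  destruct (Req_EM_T (g t) 0); auto. apply (Ss_nonneg_zero l' g); auto. Qed.

Lemma dl_nn {A} (a b : A) : 0 <= dl a b. Proof. unfold dl; destruct (eqd a b); lra. Qed.
Lemma dl_eq {A} (a : A) : dl a a = 1. Proof. unfold dl; destruct (eqd a a); congruence. Qed.
Lemma dl_neq {A} (a b : A) : a <> b -> dl a b = 0. Proof. unfold dl; destruct (eqd a b); congruence. Qed.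

Section Core1.
Variable V : Type.
Variable q : V -> V -> R.
Hypothesis Hg : is_graph q.
Hypothesis Hrev : reversible q.
Hypothesis Hconn : connected q.
Variables x0 y0 : V.

Lemma drefl x : dist q x x = 0%nat. Proof. exact (dist_refl V q Hconn x). Qed.
Lemma dsym x y : dist q x y = dist q y x. Proof. exact (dist_sym V q Hg Hrev Hconn x y). Qed.
Lemma dadj x y : 0 < q x y -> (dist q x y <= 1)%nat. Proof. exact (dist_adj V q Hconn x y). Qed.
Lemma dtri x y z : (dist q x z <= dist q x y + dist q y z)%nat. Proof. exact (dist_tri V q Hconn x y z). Qed.
Lemma qnn' x y : 0 <= q x y. Proof. exact (qnn V q Hg x y). Qed.

Definition Nx (x : V) : list V := proj1_sig (constructive_indefinite_description _ (proj2 Hg x)).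
Lemma Nx_spec x t : q x t <> 0 -> In t (Nx x).
Proof. unfold Nx. destruct (constructive_indefinite_description _ _) as [l Hl]. simpl. auto. Qed.

Definition L (x : V) : list V :=
  filter (fun y => if eqd y x then true else if Req_EM_T (q x y) 0 then false else true) (nodup eqd (x :: Nx x)).
Lemma L_nodup x : NoDup (L x). Proof. apply NoDup_filter, NoDup_nodup. Qed.
Lemma L_self x : In x (L x).
Proof. unfold L. apply filter_In. split. apply nodup_In; simpl; auto. destruct (eqd x x); congruence. Qed.
Lemma L_q x y : q x y <> 0 -> In y (L x).
Proof. intros H. unfold L. apply filter_In. split. apply nodup_In; simpl; right; apply Nx_spec; auto.
  destruct (eqd y x); auto. destruct (Req_EM_T (q x y) 0); congruence. Qed.
Lemma L_in x y : In y (L x) -> y = x \/ 0 < q x y.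
Proof. unfold L; intros H. apply filter_In in H. destruct H as [_ H]. destruct (eqd y x); auto.
  destruct (Req_EM_T (q x y) 0); [discriminate|]. right. destruct (qnn' x y); auto; congruence. Qed.
Lemma q_out x y : ~ In y (L x) -> q x y = 0.
Proof. intros H. destruct (Req_EM_T (q x y) 0); auto. exfalso; apply H, L_q; auto. Qed.

Definition P : list (V * V) := list_prod (L x0) (L y0).
Lemma P_nodup : NoDup P. Proof. apply NoDup_prod; apply L_nodup. Qed.
Lemma In_P a b : In (a, b) P <-> In a (L x0) /\ In b (L y0). Proof. apply in_prod_iff. Qed.

Definition d0 := dist q x0 y0.
Definition cst (z : V * V) : R := INR d0 - INR (dist q (fst z) (snd z)).
Definition kk (z : V * V) : Z := (Z.of_nat (dist q (fst z) (snd z)) - Z.of_nat d0)%Z.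

Lemma distL_x a : In a (L x0) -> (dist q x0 a <= 1)%nat /\ (dist q a x0 <= 1)%nat.
Proof. intros H. destruct (L_in _ _ H) as [->|Hq].
  - rewrite drefl; lia.
  - split; [apply dadj; auto|]. rewrite dsym. apply dadj; auto. Qed.
Lemma distL_y b : In b (L y0) -> (dist q y0 b <= 1)%nat /\ (dist q b y0 <= 1)%nat.
Proof. intros H. destruct (L_in _ _ H) as [->|Hq].
  - rewrite drefl; lia.
  - split; [apply dadj; auto|]. rewrite dsym. apply dadj; auto. Qed.
Lemma bound_x a : In a (L x0) -> (dist q a y0 <= d0 + 1)%nat /\ (d0 <= dist q a y0 + 1)%nat.
Proof. intros H. destruct (distL_x a H). unfold d0.
  pose proof (dtri a x0 y0). pose proof (dtri x0 a y0). lia. Qed.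
Lemma bound_y b : In b (L y0) -> (dist q x0 b <= d0 + 1)%nat /\ (d0 <= dist q x0 b + 1)%nat.
Proof. intros H. destruct (distL_y b H). unfold d0.
  pose proof (dtri x0 y0 b). pose proof (dtri x0 b y0). lia. Qed.
Lemma kk_edge z : In z P -> fst z = x0 \/ snd z = y0 -> (Z.abs (kk z) <= 1)%Z.
Proof. destruct z as [a b]. intros H; apply In_P in H. destruct H as [Ha Hb]. unfold kk; simpl.
  intros [->| ->].
  - destruct (bound_y b Hb). lia.
  - destruct (bound_x a Ha). lia. Qed.

Lemma RowSum x (s : V * V -> R) : In x (L x0) -> Ss P (fun z => dl (fst z) x * s z) = Ss (L y0) (fun b => s (x, b)).
Proof. intros H. unfold P. rewrite Ss_prod. simpl.
  rewrite (Ss_ext _ _ (fun a => dl a x * Ss (L y0) (fun b => s (a, b)))) by (intros a _; exact (Ss_scal (L y0) (dl a x) (fun b => s (a, b)))).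
  exact (Ss_delta (L x0) x (fun a => Ss (L y0) (fun b => s (a, b))) (L_nodup x0) H). Qed.
Lemma RowSum' x (s : V * V -> R) : ~ In x (L x0) -> Ss P (fun z => dl (fst z) x * s z) = 0.
Proof. intros H. apply Ss_zero. intros [a b] Hz. apply In_P in Hz. simpl. rewrite dl_neq; [ring|]. intros ->; tauto. Qed.
Lemma ColSum y (s : V * V -> R) : In y (L y0) -> Ss P (fun z => dl (snd z) y * s z) = Ss (L x0) (fun a => s (a, y)).
Proof. intros H. unfold P. rewrite Ss_prod. simpl. apply Ss_ext. intros a _.
  exact (Ss_delta (L y0) y (fun b => s (a, b)) (L_nodup y0) H). Qed.
Lemma ColSum' y (s : V * V -> R) : ~ In y (L y0) -> Ss P (fun z => dl (snd z) y * s z) = 0.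
Proof. intros H. apply Ss_zero. intros [a b] Hz. apply In_P in Hz. simpl. rewrite dl_neq; [ring|]. intros ->; tauto. Qed.

Definition Aj (j : option (bool * V)) (t : V * V) : R :=
  match j with
  | None => dl t (x0, y0)
  | Some (true, x) => if eqd x x0 then 0 else dl (fst t) x
  | Some (false, y) => if eqd y y0 then 0 else dl (snd t) y
  end.
Definition bj (j : option (bool * V)) : R :=
  match j with
  | None => 0
  | Some (true, x) => if eqd x x0 then 0 else q x0 x
  | Some (false, y) => if eqd y y0 then 0 else q y0 y
  end.
Definition LPfeas (rho : V * V -> R) : Prop :=
  (forall t, In t P -> Rle R0 (rho t)) /\ (forall t, ~ In t P -> rho t = R0) /\
  (forall j, Ss P (fun t => Rmult (Aj j t) (rho t)) = bj j).

Lemma LP_row rho x : LPfeas rho -> x <> x0 -> Ss P (fun t => dl (fst t) x * rho t) = q x0 x.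
Proof. intros [_ [_ H]] Hx. specialize (H (Some (true, x))). simpl in H. destruct (eqd x x0); [congruence|]. auto. Qed.
Lemma LP_col rho y : LPfeas rho -> y <> y0 -> Ss P (fun t => dl (snd t) y * rho t) = q y0 y.
Proof. intros [_ [_ H]] Hy. specialize (H (Some (false, y))). simpl in H. destruct (eqd y y0); [congruence|]. auto. Qed.

Definition Mb : R := Ss (L x0) (fun a => q x0 a) + Ss (L y0) (fun b => q y0 b).

Lemma LP_bound rho t : LPfeas rho -> In t P -> rho t <= Mb.
Proof. intros F Ht. destruct F as [F1 [F2 F3]] eqn:EF.
  assert (M1 : 0 <= Ss (L x0) (fun a => q x0 a)) by (apply Ss_nonneg; intros; apply qnn').
  assert (M2 : 0 <= Ss (L y0) (fun b => q y0 b)) by (apply Ss_nonneg; intros; apply qnn').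
  destruct t as [a b]. pose proof Ht as Ht'. apply In_P in Ht'. destruct Ht' as [Ha Hb]. unfold Mb.
  destruct (eqd a x0) as [Ea|Ea].
  - destruct (eqd b y0) as [Eb|Eb].
    + subst. specialize (F3 None). simpl in F3. rewrite Ss_delta in F3 by (auto; apply P_nodup). lra.
    + assert (rho (a, b) <= Ss P (fun t => dl (snd t) b * rho t)).
      { replace (rho (a, b)) with ((fun t => dl (snd t) b * rho t) (a, b)) by (simpl; rewrite dl_eq; ring).
        apply (Ss_point P (fun t => dl (snd t) b * rho t) (a, b)); auto. apply P_nodup. intros; apply Rmult_le_pos; [apply dl_nn|auto]. }
      rewrite (LP_col rho b F Eb) in H.
      assert (q y0 b <= Ss (L y0) (fun b => q y0 b)) by (apply (Ss_point _ (fun b => q y0 b)); auto; [apply L_nodup| intros; apply qnn']).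
      lra.
  - assert (rho (a, b) <= Ss P (fun t => dl (fst t) a * rho t)).
    { replace (rho (a, b)) with ((fun t => dl (fst t) a * rho t) (a, b)) by (simpl; rewrite dl_eq; ring).
      apply (Ss_point P (fun t => dl (fst t) a * rho t) (a, b)); auto. apply P_nodup. intros; apply Rmult_le_pos; [apply dl_nn|auto]. }
    rewrite (LP_row rho a F Ea) in H.
    assert (q x0 a <= Ss (L x0) (fun a => q x0 a)) by (apply (Ss_point _ (fun a => q x0 a)); auto; [apply L_nodup| intros; apply qnn']).
    lra. Qed.

Definition rho_b (z : V * V) : R :=
  if excluded_middle_informative (In z P) then
    dl (snd z) y0 * (if eqd (fst z) x0 then 0 else q x0 (fst z)) +
    dl (fst z) x0 * (if eqd (snd z) y0 then 0 else q y0 (snd z))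
  else 0.

Lemma x0y0_P : In (x0, y0) P. Proof. apply In_P; split; apply L_self. Qed.

Lemma rho_b_feas : LPfeas rho_b.
Proof. split; [|split].
  - intros t Ht. unfold rho_b. destruct (excluded_middle_informative (In t P)); [|contradiction].
    destruct (eqd (fst t) x0), (eqd (snd t) y0);
    repeat apply Rplus_le_le_0_compat; repeat apply Rmult_le_pos; try apply dl_nn; try apply qnn'; lra.
  - intros t Ht. unfold rho_b. destruct (excluded_middle_informative (In t P)); [contradiction|reflexivity].
  - intros [[[] x]|]; simpl.
    + destruct (eqd x x0) as [E|E]. { apply Ss_zero; intros; ring. }
      destruct (classic (In x (L x0))) as [Hx|Hx].
      * rewrite RowSum by auto.
        rewrite (Ss_ext _ _ (fun b => dl b y0 * q x0 x)).
        { exact (Ss_delta (L y0) y0 (fun _ => q x0 x) (L_nodup y0) (L_self y0)). }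
        intros b Hb. unfold rho_b. destruct (excluded_middle_informative (In (x, b) P)) as [_|N]; [|exfalso; apply N, In_P; auto].
        simpl. destruct (eqd x x0); [congruence|]. rewrite (dl_neq x x0) by auto. ring.
      * rewrite RowSum' by auto. symmetry; apply q_out; auto.
    + destruct (eqd x y0) as [E|E]. { apply Ss_zero; intros; ring. }
      destruct (classic (In x (L y0))) as [Hx|Hx].
      * rewrite ColSum by auto.
        rewrite (Ss_ext _ _ (fun a => dl a x0 * q y0 x)).
        { exact (Ss_delta (L x0) x0 (fun _ => q y0 x) (L_nodup x0) (L_self x0)). }
        intros a Ha. unfold rho_b. destruct (excluded_middle_informative (In (a, x) P)) as [_|N]; [|exfalso; apply N, In_P; auto].
        simpl. destruct (eqd x y0); [congruence|]. rewrite (dl_neq x y0) by auto. ring.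
      * rewrite ColSum' by auto. symmetry; apply q_out; auto.
    + rewrite (Ss_delta P (x0, y0) rho_b P_nodup x0y0_P). unfold rho_b.
      destruct (excluded_middle_informative (In (x0, y0) P)); [|reflexivity]. simpl.
      destruct (eqd x0 x0), (eqd y0 y0); try congruence. ring. Qed.

Definition rz (rho' : V -> V -> R) (z : V * V) : R := if eqd z (x0, y0) then 0 else rho' (fst z) (snd z).

Lemma plan_supp rho' : transport_plan q x0 y0 rho' -> forall a b, rho' a b <> 0 -> In (a, b) P.
Proof. intros [Tn [[lp Hlp] [Tr Tc]]] a b Hab. apply In_P. split.
  - destruct (classic (In a (L x0))) as [H|H]; auto. exfalso.
    assert (Ha : a <> x0) by (intros ->; apply H, L_self).
    assert (Z : forall y, rho' a y = 0).
    { apply finsum_zero_entries; auto.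
      - exists (map snd lp). intros y Hy. apply (in_map snd lp (a, y)). apply (Hlp (a, y)). simpl; auto.
      - rewrite Tr by auto. apply q_out; auto. }
    apply Hab, Z.
  - destruct (classic (In b (L y0))) as [H|H]; auto. exfalso.
    assert (Hb : b <> y0) by (intros ->; apply H, L_self).
    assert (Z : forall x, rho' x b = 0).
    { apply (finsum_zero_entries (fun x => rho' x b)); auto.
      - exists (map fst lp). intros x Hx. apply (in_map fst lp (x, b)). apply (Hlp (x, b)). simpl; auto.
      - rewrite Tc by auto. apply q_out; auto. }
    apply Hab, Z. Qed.

Lemma plan_to_lp rho' : transport_plan q x0 y0 rho' ->
  LPfeas (rz rho') /\ cost q x0 y0 rho' = Ss P (fun z => cst z * rz rho' z).
Proof. intros TP. pose proof (plan_supp rho' TP) as Hs. destruct TP as [Tn [Tf [Tr Tc]]].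
  assert (Hout : forall z, ~ In z P -> rho' (fst z) (snd z) = 0).
  { intros [a b] Hz. simpl. destruct (Req_EM_T (rho' a b) 0); auto. exfalso; apply Hz, Hs; auto. }
  split; [split; [|split]|].
  - intros t _. unfold rz. destruct (eqd t (x0, y0)); [lra|apply Tn].
  - intros t Ht. unfold rz. destruct (eqd t (x0, y0)); auto.
  - intros [[[] x]|]; simpl.
    + destruct (eqd x x0) as [E|E]. { apply Ss_zero; intros; ring. }
      destruct (classic (In x (L x0))) as [Hx|Hx].
      * rewrite RowSum by auto. rewrite <- (Tr x E).
        rewrite (finsum_S (L y0)); [|apply L_nodup|].
        { apply Ss_ext. intros b _. unfold rz. destruct (eqd (x, b) (x0, y0)) as [e|]; [inversion e; congruence|reflexivity]. }
        intros y Hy. apply Hs in Hy. apply In_P in Hy; tauto.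
      * rewrite RowSum' by auto. symmetry; apply q_out; auto.
    + destruct (eqd x y0) as [E|E]. { apply Ss_zero; intros; ring. }
      destruct (classic (In x (L y0))) as [Hx|Hx].
      * rewrite ColSum by auto. rewrite <- (Tc x E).
        rewrite (finsum_S (L x0)); [|apply L_nodup|].
        { apply Ss_ext. intros a _. unfold rz. destruct (eqd (a, x) (x0, y0)) as [e|]; [inversion e; congruence|reflexivity]. }
        intros y Hy. apply Hs in Hy. apply In_P in Hy; tauto.
      * rewrite ColSum' by auto. symmetry; apply q_out; auto.
    + rewrite (Ss_delta P (x0, y0) (rz rho') P_nodup x0y0_P). unfold rz. destruct (eqd (x0, y0) (x0, y0)); congruence.
  - unfold cost. rewrite (finsum_S P); [|apply P_nodup|].
    + apply Ss_ext. intros [a b] _. unfold rz, cst, d0. simpl. destruct (eqd (a, b) (x0, y0)) as [e|].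
      * inversion e; subst. ring.
      * ring.
    + intros [a b] Hz. apply Hs. simpl in Hz. intros E; apply Hz; rewrite E; ring. Qed.

Lemma exists_opt : exists rho, LPfeas rho /\
  forall rho', LPfeas rho' -> Ss P (fun z => cst z * rho' z) <= Ss P (fun z => cst z * rho z).
Proof. apply (LP.lp_list (x0, y0) P P_nodup Aj bj cst Mb).
  - exists rho_b; apply rho_b_feas.
  - intros rho F t Ht; apply LP_bound; auto. Qed.

Section Core2.
Variables y1 x1 : V.
Hypothesis Hy1 : (x0 = y0 /\ y1 = x0) \/ (x0 <> y0 /\ 0 < q x0 y1 /\ S (dist q y1 y0) = d0).
Hypothesis Hx1 : (x0 = y0 /\ x1 = y0) \/ (x0 <> y0 /\ 0 < q y0 x1 /\ S (dist q x1 x0) = d0).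
Variable rho : V * V -> R.
Hypothesis Hrho : LPfeas rho.
Hypothesis Hopt : forall rho', LPfeas rho' -> Ss P (fun z => cst z * rho' z) <= Ss P (fun z => cst z * rho z).

Definition keep (p : V * V) : Prop :=
  fst p = x0 \/ snd p = y0 \/ ((Z.abs (kk p) <= 1)%Z /\ fst p <> y1 /\ snd p <> x1).
Definition Tf (p z : V * V) : R :=
  if excluded_middle_informative (keep p) then dl z p * rho p
  else rho p * (dl z (fst p, y0) + dl z (x0, snd p)).
Definition rhat (z : V * V) : R := Ss P (fun p => Tf p z).

Lemma rho_nn t : In t P -> 0 <= rho t. Proof. apply Hrho. Qed.

Lemma edgeP_x a b : In (a, b) P -> In (a, y0) P. Proof. intros H; apply In_P in H; apply In_P; split; [tauto|apply L_self]. Qed.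
Lemma edgeP_y a b : In (a, b) P -> In (x0, b) P. Proof. intros H; apply In_P in H; apply In_P; split; [apply L_self|tauto]. Qed.

Lemma Phi (w : V * V -> R) : Ss P (fun z => w z * rhat z) =
  Ss P (fun p => if excluded_middle_informative (keep p) then w p * rho p else rho p * (w (fst p, y0) + w (x0, snd p))).
Proof. unfold rhat.
  rewrite (Ss_ext P (fun z => w z * Ss P (fun p => Tf p z)) (fun z => Ss P (fun p => w z * Tf p z)))
    by (intros z _; symmetry; exact (Ss_scal P (w z) (fun p => Tf p z))).
  rewrite (Ss_swap P P (fun z p => w z * Tf p z)).
  apply Ss_ext. intros p Hp. unfold Tf. destruct (excluded_middle_informative (keep p)).
  - rewrite (Ss_ext _ _ (fun z => dl z p * (w z * rho p))) by (intros; ring).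
    exact (Ss_delta P p (fun z => w z * rho p) P_nodup Hp).
  - destruct p as [a b]. simpl.
    rewrite (Ss_ext _ _ (fun z => dl z (a, y0) * (rho (a, b) * w z) + dl z (x0, b) * (rho (a, b) * w z))) by (intros; ring).
    rewrite (Ss_plus P (fun z => dl z (a, y0) * (rho (a, b) * w z)) (fun z => dl z (x0, b) * (rho (a, b) * w z))).
    rewrite (Ss_delta P (a, y0) (fun z => rho (a, b) * w z) P_nodup (edgeP_x a b Hp)).
    rewrite (Ss_delta P (x0, b) (fun z => rho (a, b) * w z) P_nodup (edgeP_y a b Hp)). ring. Qed.

Lemma Tf_nn p z : In p P -> 0 <= Tf p z.
Proof. intros Hp. unfold Tf. pose proof (rho_nn p Hp). destruct (excluded_middle_informative (keep p)).
  - apply Rmult_le_pos; [apply dl_nn|auto].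
  - apply Rmult_le_pos; auto. apply Rplus_le_le_0_compat; apply dl_nn. Qed.
Lemma rhat_nn z : 0 <= rhat z. Proof. apply Ss_nonneg. intros; apply Tf_nn; auto. Qed.
Lemma rhat_supp z : rhat z <> 0 -> In z P.
Proof. intros H. destruct (classic (In z P)) as [|N]; auto. exfalso; apply H. apply Ss_zero. intros p Hp. unfold Tf.
  destruct (excluded_middle_informative (keep p)).
  - rewrite dl_neq; [ring|]. intros ->; contradiction.
  - destruct p as [a b]. simpl. rewrite (dl_neq z (a, y0)), (dl_neq z (x0, b)); [ring| |].
    + intros ->; apply N; eapply edgeP_y; eauto.
    + intros ->; apply N; eapply edgeP_x; eauto. Qed.

Lemma rhat_row x : x <> x0 -> Ss P (fun z => dl (fst z) x * rhat z) = q x0 x.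
Proof. intros Hx. rewrite (Phi (fun z => dl (fst z) x)). rewrite <- (LP_row rho x Hrho Hx). apply Ss_ext.
  intros [a b] _. simpl. destruct (excluded_middle_informative (keep (a, b))); [reflexivity|].
  rewrite (dl_neq x0 x) by auto. ring. Qed.
Lemma rhat_col y : y <> y0 -> Ss P (fun z => dl (snd z) y * rhat z) = q y0 y.
Proof. intros Hy. rewrite (Phi (fun z => dl (snd z) y)). rewrite <- (LP_col rho y Hrho Hy). apply Ss_ext.
  intros [a b] _. simpl. destruct (excluded_middle_informative (keep (a, b))); [reflexivity|].
  rewrite (dl_neq y0 y) by auto. ring. Qed.

Lemma nonkeep_ineq p : In p P -> ~ keep p -> cst p <= cst (fst p, y0) + cst (x0, snd p).
Proof. destruct p as [a b]. intros Hp Hk. pose proof Hp as Hp'. apply In_P in Hp'. destruct Hp' as [Ha Hb].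
  unfold keep in Hk; simpl in Hk. unfold cst; simpl.
  assert (Hn : (dist q a y0 + dist q x0 b <= d0 + dist q a b)%nat).
  { destruct (distL_x a Ha), (distL_y b Hb).
    pose proof (dtri a b y0). pose proof (dtri x0 a b). pose proof (dtri a x0 y0). pose proof (dtri x0 y0 b).
    unfold d0 in *.
    assert (Hc : (Z.abs (kk (a, b)) > 1)%Z \/ a = y1 \/ b = x1).
    { destruct (classic ((Z.abs (kk (a, b)) > 1)%Z)); auto. destruct (eqd a y1); auto. destruct (eqd b x1); auto.
      exfalso; apply Hk; right; right; split; [lia|auto]. }
    destruct Hc as [Hc|[->| ->]].
    - unfold kk, d0 in Hc; simpl in Hc. lia.
    - destruct Hy1 as [[_ E]|[_ [_ E]]]; [exfalso; apply Hk; left; auto|]. unfold d0 in E. lia.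
    - destruct Hx1 as [[_ E]|[_ [_ E]]]; [exfalso; apply Hk; right; left; auto|]. unfold d0 in E.
      rewrite (dsym x0 x1). lia. }
  apply le_INR in Hn. rewrite !plus_INR in Hn. lra. Qed.

Lemma cost_ge : Ss P (fun p => cst p * rho p) <= Ss P (fun z => cst z * rhat z).
Proof. rewrite (Phi cst). apply Ss_le. intros p Hp. destruct (excluded_middle_informative (keep p)) as [|N]; [lra|].
  pose proof (nonkeep_ineq p Hp N). pose proof (rho_nn p Hp).
  replace (cst p * rho p) with (rho p * cst p) by ring. apply Rmult_le_compat_l; auto. Qed.

Definition wk (k : Z) (z : V * V) : R := if Z.eq_dec (kk z) k then 1 else 0.
Lemma wk_nn k z : 0 <= wk k z. Proof. unfold wk; destruct (Z.eq_dec (kk z) k); lra. Qed.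

Lemma mu_eq k : mu q x0 y0 (fun x y => rhat (x, y)) k = Ss P (fun z => wk k z * rhat z).
Proof. unfold mu. rewrite (finsum_S P); [|apply P_nodup|].
  - apply Ss_ext. intros [a b] _. unfold wk, kk, d0; simpl.
    destruct (Z.eq_dec _ k); ring.
  - intros [a b] H. simpl in H. destruct (Z.eq_dec _ k); [|congruence]. apply rhat_supp; auto. Qed.

Lemma keep_kk p : In p P -> keep p -> (Z.abs (kk p) <= 1)%Z.
Proof. intros Hp [H|[H|[H _]]]; auto; apply kk_edge; auto. Qed.

Lemma mu_zero k : (Z.abs k > 1)%Z -> mu q x0 y0 (fun x y => rhat (x, y)) k = 0.
Proof. intros Hk. rewrite mu_eq, Phi. apply Ss_zero. intros p Hp.
  assert (W : forall z, In z P -> (Z.abs (kk z) <= 1)%Z -> wk k z = 0).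
  { intros z Hz Hzk. unfold wk. destruct (Z.eq_dec (kk z) k); [lia|reflexivity]. }
  destruct (excluded_middle_informative (keep p)) as [K|K].
  - rewrite W; [ring|auto|apply keep_kk; auto].
  - destruct p as [a b]. simpl. rewrite (W (a, y0)), (W (x0, b)); [ring| | | |].
    + eapply edgeP_y; eauto.
    + apply kk_edge; [eapply edgeP_y; eauto|simpl; auto].
    + eapply edgeP_x; eauto.
    + apply kk_edge; [eapply edgeP_x; eauto|simpl; auto]. Qed.

Lemma mu_m1 : x0 <> y0 -> mu q x0 y0 (fun x y => rhat (x, y)) (-1) >= 2 * qmin q.
Proof. intros Hne.
  destruct Hy1 as [[E _]|[_ [Qy1 Dy1]]]; [contradiction|].
  destruct Hx1 as [[E _]|[_ [Qx1 Dx1]]]; [contradiction|].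
  assert (Ny1 : y1 <> x0) by (intros ->; unfold d0 in Dy1; lia).
  assert (Nx1 : x1 <> y0) by (intros ->; unfold d0 in Dx1; rewrite dsym in Dx1; lia).
  assert (W1 : wk (-1) (y1, y0) = 1) by (unfold wk, kk; simpl; destruct (Z.eq_dec _ _); [reflexivity|lia]).
  assert (W2 : wk (-1) (x0, x1) = 1) by (unfold wk, kk; simpl; rewrite dsym; destruct (Z.eq_dec _ _); [reflexivity|lia]).
  assert (D1 : forall a, dl a y1 <= wk (-1) (a, y0)) by (intros a; unfold dl; destruct (eqd a y1); [subst; lra|apply wk_nn]).
  assert (D2 : forall b, dl b x1 <= wk (-1) (x0, b)) by (intros b; unfold dl; destruct (eqd b x1); [subst; lra|apply wk_nn]).
  rewrite mu_eq, Phi.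
  assert (G : Ss P (fun p => dl (fst p) y1 * rho p + dl (snd p) x1 * rho p) <=
              Ss P (fun p => if excluded_middle_informative (keep p) then wk (-1) p * rho p
                             else rho p * (wk (-1) (fst p, y0) + wk (-1) (x0, snd p)))).
  { apply Ss_le. intros [a b] Hp. simpl. pose proof (rho_nn _ Hp).
    destruct (excluded_middle_informative (keep (a, b))) as [K|K].
    - destruct (eqd a y1) as [Ea|Ea].
      + subst a. assert (b = y0) by (destruct K as [K|[K|[_ [K _]]]]; simpl in K; congruence). subst b.
        rewrite dl_eq, (dl_neq y0 x1) by auto. rewrite W1. lra.
      + destruct (eqd b x1) as [Eb|Eb].
        * subst b. assert (a = x0) by (destruct K as [K|[K|[_ [_ K]]]]; simpl in K; congruence). subst a.
          rewrite dl_eq, (dl_neq x0 y1) by auto. rewrite W2. lra.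
        * rewrite (dl_neq a y1), (dl_neq b x1) by auto. pose proof (wk_nn (-1) (a, b)).
          assert (0 <= wk (-1) (a, b) * rho (a, b)) by (apply Rmult_le_pos; auto). lra.
    - pose proof (D1 a). pose proof (D2 b).
      assert (dl a y1 * rho (a, b) <= wk (-1) (a, y0) * rho (a, b)) by (apply Rmult_le_compat_r; auto).
      assert (dl b x1 * rho (a, b) <= wk (-1) (x0, b) * rho (a, b)) by (apply Rmult_le_compat_r; auto).
      lra. }
  rewrite (Ss_plus P (fun p => dl (fst p) y1 * rho p) (fun p => dl (snd p) x1 * rho p)) in G.
  rewrite (LP_row rho y1 Hrho Ny1), (LP_col rho x1 Hrho Nx1) in G.
  pose proof (qmin_le V q x0 y1 Qy1). pose proof (qmin_le V q y0 x1 Qx1). lra. Qed.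

Lemma lap1 f : finsum (fun z => rhat z * (tensor f (fun _ => 1) z - tensor f (fun _ => 1) (x0, y0))) =
  tensor (laplacian q f) (fun _ => 1) (x0, y0).
Proof. rewrite (finsum_S P); [|apply P_nodup|].
  2: { intros z H. apply rhat_supp. intros E; apply H; rewrite E; ring. }
  rewrite (Ss_ext P _ (fun z => (fun z => f (fst z) - f x0) z * rhat z)) by (intros; unfold tensor; simpl; ring).
  rewrite Phi.
  rewrite (Ss_ext P _ (fun p => (f (fst p) - f x0) * rho p)).
  2: { intros [a b] _. simpl. destruct (excluded_middle_informative (keep (a, b))); ring. }
  unfold P. rewrite Ss_prod. simpl.
  rewrite (Ss_ext _ _ (fun a => q x0 a * (f a - f x0))).
  2: { intros a Ha. rewrite (Ss_scal (L y0) (f a - f x0) (fun b => rho (a, b))).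
       destruct (eqd a x0) as [->|Na]; [ring|].
       rewrite <- (RowSum a rho Ha), (LP_row rho a Hrho Na). ring. }
  unfold tensor, laplacian; simpl. rewrite Rmult_1_r. symmetry. apply finsum_S; [apply L_nodup|].
  intros y H. apply L_q. intros E; apply H; rewrite E; ring. Qed.

Lemma lap2 f : finsum (fun z => rhat z * (tensor (fun _ => 1) f z - tensor (fun _ => 1) f (x0, y0))) =
  tensor (fun _ => 1) (laplacian q f) (x0, y0).
Proof. rewrite (finsum_S P); [|apply P_nodup|].
  2: { intros z H. apply rhat_supp. intros E; apply H; rewrite E; ring. }
  rewrite (Ss_ext P _ (fun z => (fun z => f (snd z) - f y0) z * rhat z)) by (intros; unfold tensor; simpl; ring).
  rewrite Phi.
  rewrite (Ss_ext P _ (fun p => (f (snd p) - f y0) * rho p)).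
  2: { intros [a b] _. simpl. destruct (excluded_middle_informative (keep (a, b))); ring. }
  unfold P. rewrite Ss_prod. simpl. rewrite Ss_swap.
  rewrite (Ss_ext _ _ (fun b => q y0 b * (f b - f y0))).
  2: { intros b Hb. rewrite (Ss_scal (L x0) (f b - f y0) (fun a => rho (a, b))).
       destruct (eqd b y0) as [->|Nb]; [ring|].
       rewrite <- (ColSum b rho Hb), (LP_col rho b Hrho Nb). ring. }
  unfold tensor, laplacian; simpl. rewrite Rmult_1_l. symmetry. apply finsum_S; [apply L_nodup|].
  intros y H. apply L_q. intros E; apply H; rewrite E; ring. Qed.

Lemma rhat_plan : transport_plan q x0 y0 (fun x y => rhat (x, y)).
Proof. split; [|split; [|split]].
  - intros; apply rhat_nn.
  - exists P. intros [a b] H. apply rhat_supp; auto.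
  - intros x Hx. destruct (classic (In x (L x0))) as [HL|HL].
    + rewrite (finsum_S (L y0)); [|apply L_nodup|].
      * rewrite <- (RowSum x rhat HL). apply rhat_row; auto.
      * intros y H. apply rhat_supp in H. apply In_P in H; tauto.
    + rewrite (finsum_S []); [|constructor|].
      * symmetry; apply q_out; auto.
      * intros y H. apply rhat_supp in H. apply In_P in H; tauto.
  - intros y Hy. destruct (classic (In y (L y0))) as [HL|HL].
    + rewrite (finsum_S (L x0)); [|apply L_nodup|].
      * rewrite <- (ColSum y rhat HL). apply rhat_col; auto.
      * intros x H. apply rhat_supp in H. apply In_P in H; tauto.
    + rewrite (finsum_S []); [|constructor|].
      * symmetry; apply q_out; auto.
      * intros x H. apply rhat_supp in H. apply In_P in H; tauto. Qed.

Lemma rhat_opt : optimal_plan q x0 y0 (fun x y => rhat (x, y)).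
Proof. split; [apply rhat_plan|]. intros rho' TP.
  destruct (plan_to_lp rho' TP) as [F E]. rewrite E.
  assert (Ec : cost q x0 y0 (fun x y => rhat (x, y)) = Ss P (fun z => cst z * rhat z)).
  { unfold cost. rewrite (finsum_S P); [|apply P_nodup|].
    - apply Ss_ext. intros [a b] _. unfold cst, d0; simpl; ring.
    - intros [a b] H. simpl in H. apply rhat_supp. intros E'; apply H; rewrite E'; ring. }
  rewrite Ec. pose proof (Hopt _ F). pose proof cost_ge. lra. Qed.

End Core2.
End Core1.

Import ListNotations.
Open Scope R_scope.

Definition Good {V : Type} (q : V -> V -> R) (x0 y0 : V) (r : V * V -> R) : Prop :=
  (forall z, 0 <= r z) /\ (exists l, forall z, r z <> 0 -> In z l) /\
  optimal_plan q x0 y0 (fun x y => r (x, y)) /\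
  (forall k, (Z.abs k > 1)%Z -> mu q x0 y0 (fun x y => r (x, y)) k = 0) /\
  (x0 <> y0 -> mu q x0 y0 (fun x y => r (x, y)) (-1) >= 2 * qmin q) /\
  (forall f, finsum (fun z => r z * (tensor f (fun _ => 1) z - tensor f (fun _ => 1) (x0, y0))) =
             tensor (laplacian q f) (fun _ => 1) (x0, y0)) /\
  (forall f, finsum (fun z => r z * (tensor (fun _ => 1) f z - tensor (fun _ => 1) f (x0, y0))) =
             tensor (fun _ => 1) (laplacian q f) (x0, y0)).

Lemma exists_good (V : Type) (q : V -> V -> R) (Hg : is_graph q) (Hrev : reversible q) (Hconn : connected q)
  (x0 y0 : V) : exists r, Good q x0 y0 r.
Proof.
  destruct (exists_opt V q Hg x0 y0) as [rho [F O]].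
  assert (Hyx : exists y1 x1,
    (x0 = y0 /\ y1 = x0 \/ x0 <> y0 /\ 0 < q x0 y1 /\ S (dist q y1 y0) = d0 V q x0 y0) /\
    (x0 = y0 /\ x1 = y0 \/ x0 <> y0 /\ 0 < q y0 x1 /\ S (dist q x1 x0) = d0 V q x0 y0)).
  { destruct (eqd x0 y0) as [E|E]. { exists x0, y0. split; left; auto. }
    destruct (first_step V q Hconn x0 y0 E) as [y1 [Q1 D1]].
    destruct (first_step V q Hconn y0 x0 (not_eq_sym E)) as [x1 [Q2 D2]].
    exists y1, x1. split; right; repeat split; auto. unfold d0. rewrite D2. apply dist_sym; auto. }
  destruct Hyx as [y1 [x1 [H1 H2]]].
  exists (rhat V q Hg x0 y0 y1 x1 rho).
  split; [|split; [|split; [|split; [|split; [|split]]]]].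
  - apply rhat_nn; auto.
  - exists (P V q Hg x0 y0). apply rhat_supp; auto.
  - apply rhat_opt; auto.
  - intros k Hk. apply (mu_zero V q Hg Hrev Hconn x0 y0 y1 x1 H1 H2 rho k Hk).
  - apply mu_m1; auto.
  - intros f. apply lap1; auto.
  - intros f. apply lap2; auto.
Qed.

Theorem mainTheorem3 (V : Type) (q : V -> V -> R)
  (HV : countable V) (Hg : is_graph q)
  (Hrev : reversible q) (Hconn : connected q) :
  exists qt : V * V -> V * V -> R, perfect_coupling q qt.
Proof.
  set (qt := fun a : V * V => epsilon (inhabits (fun _ : V * V => 0)) (Good q (fst a) (snd a))).
  assert (Hq : forall a, Good q (fst a) (snd a) (qt a)).
  { intros a. unfold qt. apply epsilon_spec. apply exists_good; auto. }
  exists qt. split.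
  - split; [split|split].
    + intros a z. apply (Hq a).
    + intros a. destruct (Hq a) as [_ [[l Hl] _]]. exists l; auto.
    + intros f. apply functional_extensionality. intros [x0 y0].
      destruct (Hq (x0, y0)) as [_ [_ [_ [_ [_ [L1 _]]]]]]. apply L1.
    + intros f. apply functional_extensionality. intros [x0 y0].
      destruct (Hq (x0, y0)) as [_ [_ [_ [_ [_ [_ L2]]]]]]. apply L2.
  - intros x0 y0. cbv zeta.
    destruct (Hq (x0, y0)) as [_ [_ [O [M1 [M2 _]]]]]. simpl in *. auto.
Qed.
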